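(* Let $\mathsf{X}$ and $\mathsf{Y}$ be intermediate temporal logics with $\mathsf{X}\subseteq\mathsf{Y}$. A temporal theory $\Gamma$ is $\mathsf{X}$-consistent if and only if it is $\mathsf{Y}$-consistent.
   Context: Fix a countable set $\mathbb{P}$ of atoms. Temporal formulas: $\varphi ::= p\mid\bot\mid\varphi\wedge\varphi\mid\varphi\vee\varphi\mid\varphi\to\varphi\mid\circ\varphi\mid\varphi\,\mathsf{U}\,\varphi\mid\varphi\,\mathsf{R}\,\varphi$; $\Box\varphi:=\bot\,\mathsf{R}\,\varphi$. An intuitionistic temporal frame is $(W,\preccurlyeq,S)$ with $W\ne\emptyset$, $\preccurlyeq$ a partial order, $S:W\to W$ forward confluent ($w\preccurlyeq v\Rightarrow S(w)\preccurlyeq S(v)$); persistent if also backward confluent (if $S(w)=v\preccurlyeq u$ then some $t\succcurlyeq w$ has $S(t)=u$). A model adds $V:W\to2^{\mathbb{P}}$ monotone along $\preccurlyeq$. Satisfaction: atoms via $V$; $\bot$ never; $\wedge,\vee$ pointwise; $M,w\models\varphi\to\psi$ iff for all $v\succcurlyeq w$, $M,v\models\varphi$ implies $M,v\models\psi$; $\circ\varphi$ at $w$ iff $\varphi$ at $S(w)$; $\varphi\,\mathsf{U}\,\psi$: some $k\ge0$ with $\psi$ at $S^k(w)$ and $\varphi$ at $S^i(w)$ for all $0\le i<k$; $\varphi\,\mathsf{R}\,\psi$: for all $k\ge0$, $\psi$ at $S^k(w)$ or $\varphi$ at some $S^i(w)$, $0\le i<k$. Depth $\le n$: no chain of $n+1$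 pairwise distinct $\preccurlyeq$-related worlds. $\mathrm{ITL}^{\mathrm{BD}_n}$: formulas true at every world of every model on a persistent frame of depth $\le n$; $\mathrm{LTL}:=\mathrm{ITL}^{\mathrm{BD}_1}$. An intermediate temporal logic is a set $\mathsf{X}$ with $\mathrm{ITL}^{\mathrm{BD}_n}\subseteq\mathsf{X}\subseteq\mathrm{LTL}$ for some $n\ge1$, closed under modus ponens, necessitation ($\psi\in\mathsf{X}\Rightarrow\circ\psi,\Box\psi\in\mathsf{X}$) and uniform substitution. $\mathsf{X}$-models are models on persistent frames of depth $\le n$ validating every formula of $\mathsf{X}$. $\Gamma$ is $\mathsf{X}$-consistent if some $\mathsf{X}$-model satisfies all of $\Gamma$ at some world. *)

(* Defs.v *)
From Stdlib Require Import Arith.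

Set Implicit Arguments.

(* Atoms: the countable set P is represented by nat. *)
Inductive form : Type :=
| Var : nat -> form
| Bot : form
| And : form -> form -> form
| Or : form -> form -> form
| Imp : form -> form -> form
| Next : form -> form
| Until : form -> form -> form
| Release : form -> form -> form.

Definition Box (phi : form) : form := Release Bot phi.

Record frame : Type := Frame {
  W : Type;
  inhabW : W;
  le : W -> W -> Prop;
  succ : W -> W;
  le_refl : forall w, le w w;
  le_trans : forall u v w, le u v -> le v w -> le u w;
  le_antisym : forall u v, le u v -> le v u -> u = v;
  fwd_conf : forall w v, le w v -> le (succ w) (succ v)
}.

Definition persistent (F : frame) : Prop :=
  forall w u, le F (succ F w) u -> exists t, le F w t /\ succ F t = u.

Definition depth_le (n : nat) (F : frame) : Prop :=
  ~ exists c : nat -> W F,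
      forall i j, i <= j -> j <= n -> le F (c i) (c j) /\ (i <> j -> c i <> c j).

Record model : Type := Model {
  mframe :> frame;
  val : W mframe -> nat -> Prop;
  val_mono : forall w v p, le mframe w v -> val w p -> val v p
}.

Fixpoint iter_succ (F : frame) (k : nat) (w : W F) : W F :=
  match k with
  | 0 => w
  | S k' => succ F (iter_succ F k' w)
  end.

Fixpoint sat (M : model) (w : W M) (phi : form) {struct phi} : Prop :=
  match phi with
  | Var p => val M w p
  | Bot => False
  | And a b => sat M w a /\ sat M w b
  | Or a b => sat M w a \/ sat M w b
  | Imp a b => forall v, le M w v -> sat M v a -> sat M v b
  | Next a => sat M (succ M w) a
  | Until a b => exists k, sat M (iter_succ M k w) b /\
                   forall i, i < k -> sat M (iter_succ M i w) a
  | Release a b => forall k, sat M (iter_succ M k w) b \/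
                   exists i, i < k /\ sat M (iter_succ M i w) a
  end.

Definition valid_in (M : model) (phi : form) : Prop := forall w, sat M w phi.

Definition ITL_BD (n : nat) (phi : form) : Prop :=
  forall M : model, persistent M -> depth_le n M -> valid_in M phi.

Definition LTL : form -> Prop := ITL_BD 1.

Fixpoint subst (s : nat -> form) (phi : form) : form :=
  match phi with
  | Var p => s p
  | Bot => Bot
  | And a b => And (subst s a) (subst s b)
  | Or a b => Or (subst s a) (subst s b)
  | Imp a b => Imp (subst s a) (subst s b)
  | Next a => Next (subst s a)
  | Until a b => Until (subst s a) (subst s b)
  | Release a b => Release (subst s a) (subst s b)
  end.

Definition subset (X Y : form -> Prop) : Prop := forall phi, X phi -> Y phi.

Definition intermediate_TL (X : form -> Prop) : Prop :=
  (exists n, 1 <= n /\ subset (ITL_BD n) X) /\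
  subset X LTL /\
  (forall phi psi, X phi -> X (Imp phi psi) -> X psi) /\
  (forall psi, X psi -> X (Next psi) /\ X (Box psi)) /\
  (forall s phi, X phi -> X (subst s phi)).

Definition X_model (X : form -> Prop) (M : model) : Prop :=
  (exists n, 1 <= n /\ subset (ITL_BD n) X /\ depth_le n M) /\
  persistent M /\
  (forall phi, X phi -> valid_in M phi).

Definition X_consistent (X : form -> Prop) (Gamma : form -> Prop) : Prop :=
  exists (M : model) (w : W M), X_model X M /\ forall phi, Gamma phi -> sat M w phi.

(* Main.v *)
Require Import Defs.
From Stdlib Require Import Arith Lia Classical ClassicalEpsilon.

Lemma iter_mono (F : frame) k w v : le F w v -> le F (iter_succ F k w) (iter_succ F k v).
Proof. intro H; induction k; simpl; auto. apply fwd_conf; auto. Qed.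

Lemma sat_mono (M : model) phi : forall w v, le M w v -> sat M w phi -> sat M v phi.
Proof.
  induction phi; simpl; intros w v Hle H.
  - eapply val_mono; eauto.
  - auto.
  - destruct H; split; eauto.
  - destruct H; [left|right]; eauto.
  - intros u Hu; apply H; eapply le_trans; eauto.
  - eapply IHphi; [apply fwd_conf; eauto| auto].
  - destruct H as [k [H1 H2]]; exists k; split; [eapply IHphi2; [apply iter_mono; eauto|auto]|].
    intros i Hi; eapply IHphi1; [apply iter_mono; eauto| auto].
  - intro k; destruct (H k) as [H1|[i [Hi H1]]]; [left|right].
    + eapply IHphi2; [apply iter_mono; eauto|auto].
    + exists i; split; auto; eapply IHphi1; [apply iter_mono; eauto|auto].
Qed.

Definition maxl (F : frame) (u : W F) := forall v, le F u v -> v = u.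

Lemma maxl_succ (F : frame) u : persistent F -> maxl F u -> maxl F (succ F u).
Proof.
  intros P Hm v Hv. destruct (P _ _ Hv) as [t [Ht Hs]].
  apply Hm in Ht; subst; auto.
Qed.

Lemma maxl_iter (F : frame) u k : persistent F -> maxl F u -> maxl F (iter_succ F k u).
Proof. intros P H; induction k; simpl; auto. apply maxl_succ; auto. Qed.

Section Flat.
Variable M : model.

Definition flatF : frame.
Proof.
  refine (@Frame (W M) (inhabW M) (@eq (W M)) (succ M) _ _ _ _).
  - reflexivity.
  - intros; subst; reflexivity.
  - intros; auto.
  - intros; subst; reflexivity.
Defined.

Definition flatM : model.
Proof.
  refine (@Model flatF (val M) _).
  intros w v p H; simpl in H; subst; auto.
Defined.

Lemma iter_flat k u : @iter_succ (mframe flatM) k u = iter_succ M k u.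
Proof. induction k; simpl; auto. simpl in IHk. rewrite IHk; reflexivity. Qed.

Lemma sat_flat phi : persistent M -> forall u, maxl M u -> (sat flatM u phi <-> sat M u phi).
Proof.
  intro P; induction phi; intros u Hu; simpl.
  - tauto.
  - tauto.
  - rewrite IHphi1, IHphi2; tauto.
  - rewrite IHphi1, IHphi2; tauto.
  - split.
    + intros H v Hv Ha. pose proof (Hu _ Hv); subst.
      apply IHphi2; auto. apply H; [reflexivity|]. apply IHphi1; auto.
    + intros H v Hv Ha. simpl in Hv; subst.
      apply IHphi2; auto. apply H; [apply le_refl|]. apply IHphi1; auto.
  - apply IHphi. apply maxl_succ; auto.
  - split; intros [k [H1 H2]]; exists k; rewrite iter_flat in *; split.
    + apply IHphi2; auto using maxl_iter.
    + intros i Hi; specialize (H2 i Hi); rewrite iter_flat in H2; apply IHphi1; auto using maxl_iter.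
    + apply IHphi2; auto using maxl_iter.
    + intros i Hi; rewrite iter_flat; apply IHphi1; auto using maxl_iter.
  - split; intros H k; destruct (H k) as [H1|[i [Hi H1]]].
    + left; rewrite iter_flat in H1; apply IHphi2; auto using maxl_iter.
    + right; exists i; split; auto; rewrite iter_flat in H1; apply IHphi1; auto using maxl_iter.
    + left; rewrite iter_flat; apply IHphi2; auto using maxl_iter.
    + right; exists i; split; auto; rewrite iter_flat; apply IHphi1; auto using maxl_iter.
Qed.

Lemma flat_persistent : persistent flatM.
Proof. intros w u H; simpl in *. exists w; split; auto. Qed.

Lemma flat_depth n : 1 <= n -> depth_le n flatM.
Proof.
  intros Hn [c Hc]. destruct (Hc 0 1) as [H1 H2]; try lia.
  apply H2; auto.
Qed.
End Flat.

Section Exmax.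
Variable F : frame.

Definition g (v : W F) : W F :=
  match excluded_middle_informative (exists v', le F v v' /\ v' <> v) with
  | left H => proj1_sig (constructive_indefinite_description _ H)
  | right _ => v
  end.

Lemma g_spec v : (exists v', le F v v' /\ v' <> v) -> le F v (g v) /\ g v <> v.
Proof.
  intro H. unfold g. destruct (excluded_middle_informative _) as [H'|H'].
  - destruct (constructive_indefinite_description _ H') as [x Hx]; simpl; auto.
  - contradiction.
Qed.

Lemma exists_max n w : depth_le n F -> exists v, le F w v /\ maxl F v.
Proof.
  intro D. apply NNPP; intro Hno.
  assert (Hs : forall v, le F w v -> exists v', le F v v' /\ v' <> v).
  { intros v Hv. apply NNPP; intro Hn. apply Hno. exists v; split; auto.
    intros v' Hv'. apply NNPP; intro Hne. apply Hn; eauto. }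
  set (c := fun k => Nat.iter k g w).
  assert (Hc : forall k, le F w (c k) /\ le F (c k) (c (S k)) /\ c (S k) <> c k).
  { induction k.
    - simpl. destruct (g_spec w (Hs w (le_refl F w))); repeat split; auto using le_refl.
    - destruct IHk as [A [B C]].
      assert (A' : le F w (c (S k))) by (eapply le_trans; eauto).
      destruct (g_spec _ (Hs _ A')); repeat split; auto. }
  assert (Hle : forall i d, le F (c i) (c (i + d))).
  { intros i d; induction d. rewrite Nat.add_0_r; apply le_refl.
    eapply le_trans; [apply IHd|]. replace (i + S d) with (S (i + d)) by lia. apply Hc. }
  apply D. exists c. intros i j Hij _. split.
  - replace j with (i + (j - i)) by lia. apply Hle.
  - intros Hne Heq. assert (S i <= j) by lia.
    assert (le F (c (S i)) (c i)).
    { rewrite Heq. replace j with (S i + (j - S i)) by lia. apply Hle. }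
    apply (proj2 (proj2 (Hc i))). apply le_antisym; auto. apply Hc.
Qed.
End Exmax.

Lemma depth_mono (F : frame) n m : n <= m -> depth_le n F -> depth_le m F.
Proof.
  intros Hnm D [c Hc]. apply D. exists c. intros i j Hij Hj. apply Hc; lia.
Qed.

Lemma ITL_anti n m : n <= m -> subset (ITL_BD m) (ITL_BD n).
Proof.
  intros Hnm phi H M P D. apply H; auto. eapply depth_mono; eauto.
Qed.

Theorem proposition4p9 (X Y : form -> Prop) :
  intermediate_TL X -> intermediate_TL Y -> subset X Y ->
  forall Gamma : form -> Prop, X_consistent X Gamma <-> X_consistent Y Gamma.
Proof.
  intros HX HY HXY Gamma. split.
  - intros [M [w [[[n [Hn [Hsub D]]] [P V]] HG]]].
    destruct (@exists_max M n w D) as [v [Hwv Hv]].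
    destruct HY as [[m [Hm Hsm]] [HYL _]].
    exists (flatM M), v. split.
    + split; [exists m; repeat split; auto using flat_depth|].
      split; [apply flat_persistent|].
      intros phi Hphi. apply HYL in Hphi. apply Hphi; [apply flat_persistent|apply flat_depth; auto].
    + intros phi Hphi. apply sat_flat; auto. eapply sat_mono; eauto.
  - intros [M [w [[[n [Hn [Hsub D]]] [P V]] HG]]].
    destruct HX as [[m [Hm Hsm]] _].
    exists M, w. split; auto.
    split; [exists (Nat.max n m); repeat split|split; auto].
    + lia.
    + intros phi Hphi. apply Hsm. eapply ITL_anti; [|eauto]. lia.
    + eapply depth_mono; [|eauto]. lia.
Qed.
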